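(* Let $N\geq 2$ and let $\Sigma$ be the one-sided shift on $\{0,1,\dots,N-1\}^{\mathbb{N}_0}$, ordered lexicographically. Then for every $L\geq N+2$ there exists a forbidden order pattern $\pi\in\mathcal{S}_L$ for $\Sigma$.
   Context: $\{0,1,\dots,N-1\}^{\mathbb{N}_0}$ is the set of sequences $\omega=(\omega_0,\omega_1,\dots)$ with $\omega_n\in\{0,\dots,N-1\}$, and $\Sigma(\omega_0,\omega_1,\omega_2,\dots)=(\omega_1,\omega_2,\dots)$. The lexicographic order: $\omega<\omega'$ iff $\omega_0<\omega'_0$, or there is $n\geq1$ with $\omega_k=\omega'_k$ for $k<n$ and $\omega_n<\omega'_n$. $\mathcal{S}_L$ is the set of permutations $\pi=[\pi_0,\dots,\pi_{L-1}]$ of $\{0,\dots,L-1\}$. A sequence $\omega$ defines $\pi$ if $\Sigma^{\pi_0}(\omega)<\Sigma^{\pi_1}(\omega)<\dots<\Sigma^{\pi_{L-1}}(\omega)$. A pattern $\pi\in\mathcal{S}_L$ is forbidden for $\Sigma$ if no $\omega$ defines it. *)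

(* Defs.v *)
From mathcomp Require Import all_boot all_order all_fingroup.
Set Implicit Arguments. Unset Strict Implicit. Unset Printing Implicit Defensive.

Definition word (N : nat) := nat -> 'I_N.

Definition shift (N : nat) (w : word N) : word N := fun n => w n.+1.
Definition shiftn (N : nat) (k : nat) (w : word N) : word N := iter k (@shift N) w.

Definition lexlt (N : nat) (w w' : word N) : Prop :=
  exists n : nat, (forall k, k < n -> w k = w' k) /\ (w n < w' n)%N.

Definition defines (N L : nat) (w : word N) (pi : 'S_L) : Prop :=
  forall i j : 'I_L, (i < j)%N -> lexlt (shiftn (pi i) w) (shiftn (pi j) w).

Definition forbidden (N L : nat) (pi : 'S_L) : Prop :=
  ~ exists w : word N, defines w pi.

(* Main.v *)
Require Import Defs.
From mathcomp Require Import all_boot all_order all_fingroup.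
From mathcomp Require Import zify.

Set Implicit Arguments. Unset Strict Implicit. Unset Printing Implicit Defensive.

Lemma shiftnE N k (w : word N) n : shiftn k w n = w (k + n).
Proof.
elim: k n => [|k IH] n //=.
rewrite /shiftn /= -/(shiftn k w) /shift IH; congr w; lia.
Qed.

Definition R N (w : word N) a b :=
  exists n, (forall k, k < n -> w (a + k) = w (b + k)) /\ (w (a + n) < w (b + n))%N.

Lemma lexltR N (w : word N) a b : lexlt (shiftn a w) (shiftn b w) -> R w a b.
Proof.
case=> n [H1 H2]; exists n; split.
  by move=> k /H1; rewrite !shiftnE.
by rewrite !shiftnE in H2.
Qed.

Lemma R_asym N (w : word N) a b : R w a b -> R w b a -> False.
Proof.
case=> n [H1 H2] [m [H3 H4]].
case: (ltngtP n m) => Hnm.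
- by move: (H3 _ Hnm) H2 => ->; rewrite ltnn.
- by move: (H1 _ Hnm) H4 => ->; rewrite ltnn.
- subst m; move: H2 H4; lia.
Qed.

Lemma R_key N (w : word N) a b : R w a b -> R w (b + 1) (a + 1) -> (w a < w b)%N.
Proof.
case=> [[|m]] [H1 H2] H.
  by rewrite !addn0 in H2.
exfalso; apply: (R_asym _ H); exists m; split.
  move=> k Hk; have := H1 k.+1 ltac:(lia).
  have -> : a + 1 + k = a + k.+1 by lia.
  by have -> : b + 1 + k = b + k.+1 by lia.
have -> : a + 1 + m = a + m.+1 by lia.
by have -> : b + 1 + m = b + m.+1 by lia.
Qed.

Definition fn (M k : nat) := if 2 * k < M then M - 1 - 2 * k else 2 * k - M.
Definition gn (M k : nat) := if 2 * k < M then M - k else M - 1 - k.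

Lemma fn_lt M k : k <= M -> fn M k <= M.
Proof. rewrite /fn; case: ifP; lia. Qed.

Lemma fn_inj M i j : i <= M -> j <= M -> fn M i = fn M j -> i = j.
Proof. rewrite /fn; case: ifP; case: ifP; lia. Qed.

Lemma fn_succ M k : k < M -> fn M k + 1 = fn M (gn M k).
Proof. rewrite /fn /gn; case: ifP => H1; case: ifP => H2; lia. Qed.

Lemma gn_le M k : k < M -> gn M k <= M.
Proof. rewrite /gn; case: ifP; lia. Qed.

Lemma gn_dec M k : k.+1 < M -> gn M k.+1 < gn M k.
Proof. rewrite /gn; case: ifP; case: ifP; lia. Qed.

Theorem proposition4 (N : nat) (HN : 2 <= N) (L : nat) (HL : N + 2 <= L) :
  exists pi : 'S_L, forbidden N pi.
Proof.
case: L HL => [|M] HL; first by lia.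
pose f := fun k : 'I_M.+1 => (inord (fn M k) : 'I_M.+1).
have finj : injective f.
  move=> i j; rewrite /f => /(congr1 val).
  have Hi := ltn_ord i; have Hj := ltn_ord j.
  have := fn_lt (k:=j) (M:=M) ltac:(lia).
  have := fn_lt (k:=i) (M:=M) ltac:(lia).
  move=> Fi Fj /= E.
  rewrite !inordK in E; try lia. apply: val_inj; apply: (fn_inj (M:=M)) => //; lia.
exists (perm finj); case=> w Hd.
have HR : forall i j, i < j -> j < M.+1 -> R w (fn M i) (fn M j).
  move=> i j Hij HjL.
  have := fn_lt (k:=j) (M:=M) ltac:(lia).
  have := fn_lt (k:=i) (M:=M) ltac:(lia).
  move=> Fi Fj.
  have := Hd (inord i) (inord j); rewrite !permE /f !inordK; try lia.
  by move=> H; apply: lexltR; apply: H.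
have step : forall k, k.+1 < M -> (w (fn M k) < w (fn M k.+1))%N.
  move=> k Hk; apply: R_key; first by apply: HR; lia.
  rewrite !fn_succ; try lia.
  apply: HR; first by apply: gn_dec.
  have := gn_le (M:=M) (k:=k) ltac:(lia); lia.
have ind : forall k, k < M -> k <= w (fn M k).
  elim=> [|k IH] Hk //.
  have := step k Hk; have := IH ltac:(lia); lia.
have := ind M.-1 ltac:(lia).
have := ltn_ord (w (fn M M.-1)); lia.
Qed.
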